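(* If $X$ is a proper Gromov hyperbolic geodesic metric space, then the quotient $[\partial_hX]_s$ of the horofunction boundary by the sublinear difference relation is homeomorphic to the Gromov boundary $\partial X$.
   Context: With basepoint $o$, $b_y(x)=d(x,y)-d(o,y)$; the horofunction boundary $\partial_hX$ consists of pointwise limits $b_\xi$ of $b_{y_n}$ along unbounded sequences (compact-open topology). Two points $\xi,\eta\in\partial_hX$ are sublinearly equivalent if $\lim_{n\to\infty}\sup_{d(o,x)\ge n}|b_\xi(x)-b_\eta(x)|/d(o,x)=0$; $[\partial_hX]_s$ is the quotient space. *)

(* Defs.v *)
From Stdlib Require Import Reals List.
Open Scope R_scope.

Definition is_metric {X : Type} (d : X -> X -> R) : Prop :=
  (forall x y, 0 <= d x y) /\ (forall x y, d x y = 0 <-> x = y) /\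
  (forall x y, d x y = d y x) /\ (forall x y z, d x z <= d x y + d y z).

Definition geodesic_space {X : Type} (d : X -> X -> R) : Prop :=
  forall x y : X, exists g : R -> X, g 0 = x /\ g (d x y) = y /\
    forall s t, 0 <= s <= d x y -> 0 <= t <= d x y -> d (g s) (g t) = Rabs (s - t).

Definition metric_open {X : Type} (d : X -> X -> R) (U : X -> Prop) : Prop :=
  forall x, U x -> exists e, 0 < e /\ forall y, d x y < e -> U y.

Definition compact_in {X : Type} (d : X -> X -> R) (K : X -> Prop) : Prop :=
  forall (I : Type) (U : I -> X -> Prop),
    (forall i, metric_open d (U i)) -> (forall x, K x -> exists i, U i x) ->
    exists l : list I, forall x, K x -> exists i, In i l /\ U i x.

Definition proper_space {X : Type} (d : X -> X -> R) : Prop :=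
  forall x r, compact_in d (fun y => d x y <= r).

Definition gromov_product {X : Type} (d : X -> X -> R) (w x y : X) : R :=
  (d x w + d y w - d x y) / 2.

Definition gromov_hyperbolic {X : Type} (d : X -> X -> R) : Prop :=
  exists delta, 0 <= delta /\ forall w x y z,
    Rmin (gromov_product d w x z) (gromov_product d w y z) - delta
      <= gromov_product d w x y.

Definition busemann {X : Type} (d : X -> X -> R) (o y : X) : X -> R :=
  fun x => d x y - d o y.

Definition is_horofunction {X : Type} (d : X -> X -> R) (o : X) (b : X -> R) : Prop :=
  exists y : nat -> X, (forall M, exists n, M < d o (y n)) /\
    forall x, Un_cv (fun n => busemann d o (y n) x) (b x).

Definition horo_boundary {X : Type} (d : X -> X -> R) (o : X) : Type :=
  { b : X -> R | is_horofunction d o b }.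

Definition R_open (U : R -> Prop) : Prop :=
  forall r, U r -> exists e, 0 < e /\ forall s, Rabs (s - r) < e -> U s.

(* subbasic sets V(K,U) = {f | f(K) subset U} of the compact-open topology *)
Definition co_subbasic {X : Type} (d : X -> X -> R) (S : (X -> R) -> Prop) : Prop :=
  exists (K : X -> Prop) (U : R -> Prop), compact_in d K /\ R_open U /\
    forall f, S f <-> (forall x, K x -> U (f x)).

(* topology generated by the subbasis: unions of finite intersections *)
Definition co_open {X : Type} (d : X -> X -> R) (W : (X -> R) -> Prop) : Prop :=
  forall f, W f -> exists l : list ((X -> R) -> Prop),
    (forall S, In S l -> co_subbasic d S) /\ (forall S, In S l -> S f) /\
    (forall g, (forall S, In S l -> S g) -> W g).

Definition horo_open {X : Type} (d : X -> X -> R) (o : X)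
  (U : horo_boundary d o -> Prop) : Prop :=
  exists W, co_open d W /\ forall b, U b <-> W (proj1_sig b).

(* sublinear equivalence: lim_n sup_{d(o,x)>=n} |f x - g x| / d(o,x) = 0 *)
Definition sublin_equiv {X : Type} (d : X -> X -> R) (o : X) (f g : X -> R) : Prop :=
  forall eps, 0 < eps -> exists N, forall x, N <= d o x ->
    Rabs (f x - g x) <= eps * d o x.

Definition sublin_quotient {X : Type} (d : X -> X -> R) (o : X) : Type :=
  { C : horo_boundary d o -> Prop |
    exists xi : horo_boundary d o,
      C = fun eta => sublin_equiv d o (proj1_sig xi) (proj1_sig eta) }.

Definition sq_proj {X : Type} (d : X -> X -> R) (o : X) (xi : horo_boundary d o)
  : sublin_quotient d o :=
  exist _ (fun eta => sublin_equiv d o (proj1_sig xi) (proj1_sig eta))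
        (ex_intro _ xi eq_refl).

Definition sq_open {X : Type} (d : X -> X -> R) (o : X)
  (U : sublin_quotient d o -> Prop) : Prop :=
  horo_open d o (fun xi => U (sq_proj d o xi)).

Definition conv_at_infty {X : Type} (d : X -> X -> R) (o : X) (x : nat -> X) : Prop :=
  forall M, exists N, forall i j, (N <= i)%nat -> (N <= j)%nat ->
    M <= gromov_product d o (x i) (x j).

Definition seq_equiv {X : Type} (d : X -> X -> R) (o : X) (x y : nat -> X) : Prop :=
  forall M, exists N, forall i j, (N <= i)%nat -> (N <= j)%nat ->
    M <= gromov_product d o (x i) (y j).

Definition gromov_boundary {X : Type} (d : X -> X -> R) (o : X) : Type :=
  { C : (nat -> X) -> Prop | exists x, conv_at_infty d o x /\
      C = fun y => conv_at_infty d o y /\ seq_equiv d o x y }.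

(* (xi|eta)_o > r, where (xi|eta)_o = sup over representatives of
   liminf_{i,j} (x_i|y_j)_o *)
Definition gprod_gt {X : Type} (d : X -> X -> R) (o : X)
  (xi eta : gromov_boundary d o) (r : R) : Prop :=
  exists x y, proj1_sig xi x /\ proj1_sig eta y /\
    exists r', r < r' /\ exists N, forall i j, (N <= i)%nat -> (N <= j)%nat ->
      r' <= gromov_product d o (x i) (y j).

(* topology: the sets {eta | (xi|eta)_o > r} form neighbourhood bases *)
Definition gb_open {X : Type} (d : X -> X -> R) (o : X)
  (U : gromov_boundary d o -> Prop) : Prop :=
  forall xi, U xi -> exists r, forall eta, gprod_gt d o xi eta r -> U eta.

Definition homeomorphic {A B : Type} (openA : (A -> Prop) -> Prop)
  (openB : (B -> Prop) -> Prop) : Prop :=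
  exists (f : A -> B) (g : B -> A),
    (forall a, g (f a) = a) /\ (forall b, f (g b) = b) /\
    (forall V, openB V -> openA (fun a => V (f a))) /\
    (forall U, openA U -> openB (fun b => U (g b))).

(* Submission.v *)
Require Import Defs.
From Stdlib Require Import Reals Lra Lia List.
From Stdlib Require Import ClassicalEpsilon ProofIrrelevance FunctionalExtensionality PropExtensionality Classical.
Open Scope R_scope.

Ltac rabs := unfold Rabs in *; repeat match goal with
  | |- context[Rcase_abs ?x] => destruct (Rcase_abs x)
  | H: context[Rcase_abs ?x] |- _ => destruct (Rcase_abs x) end; try lra.
Ltac rmin := unfold Rmin in *; repeat match goal with
  | |- context[Rle_dec ?x ?y] => destruct (Rle_dec x y)
  | H: context[Rle_dec ?x ?y] |- _ => destruct (Rle_dec x y) end; try lra.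

Definition strict (f : nat -> nat) := forall n, (f n < f (S n))%nat.

Lemma strict_mono f : strict f -> forall n m, (n <= m)%nat -> (f n <= f m)%nat.
Proof. intros H n m Hnm; induction Hnm; [lia|]. specialize (H m). lia. Qed.

Lemma strict_ge f : strict f -> forall n, (n <= f n)%nat.
Proof. intros H n; induction n; [lia|]. specialize (H n); lia. Qed.

Lemma strict_comp f g : strict f -> strict g -> strict (fun n => f (g n)).
Proof. intros Hf Hg n. pose proof (Hg n). 
  assert (f (S (g n)) <= f (g (S n)))%nat by (apply strict_mono; auto).
  specialize (Hf (g n)); lia. Qed.

Lemma cv_subseq u l f : Un_cv u l -> strict f -> Un_cv (fun n => u (f n)) l.
Proof. intros H Hf e He. destruct (H e He) as [N HN]. exists N. intros n Hn.
  apply HN. pose proof (strict_ge f Hf n); lia. Qed.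

Lemma cv_ge u l c N : Un_cv u l -> (forall n, (N <= n)%nat -> c <= u n) -> c <= l.
Proof. intros H Hc. destruct (Rle_dec c l) as [|Hn]; auto. exfalso.
  destruct (H (c - l)) as [M HM]; [lra|]. specialize (HM (max N M) ltac:(lia)).
  specialize (Hc (max N M) ltac:(lia)). unfold R_dist in HM. rabs. Qed.

Lemma cv_le u l c N : Un_cv u l -> (forall n, (N <= n)%nat -> u n <= c) -> l <= c.
Proof. intros H Hc. destruct (Rle_dec l c) as [|Hn]; auto. exfalso.
  destruct (H (l - c)) as [M HM]; [lra|]. specialize (HM (max N M) ltac:(lia)).
  specialize (Hc (max N M) ltac:(lia)). unfold R_dist in HM. rabs. Qed.

Lemma cv_lt_ev u l c : Un_cv u l -> l < c -> exists N, forall n, (N <= n)%nat -> u n < c.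
Proof. intros H Hc. destruct (H (c - l)) as [M HM]; [lra|]. exists M. intros n Hn.
  specialize (HM n Hn). unfold R_dist in HM. rabs. Qed.

Lemma cv_gt_ev u l c : Un_cv u l -> c < l -> exists N, forall n, (N <= n)%nat -> c < u n.
Proof. intros H Hc. destruct (H (l - c)) as [M HM]; [lra|]. exists M. intros n Hn.
  specialize (HM n Hn). unfold R_dist in HM. rabs. Qed.

Lemma cv_close u l e : Un_cv u l -> 0 < e -> exists N, forall n, (N <= n)%nat -> Rabs (u n - l) < e.
Proof. intros H He. destruct (H e He) as [M HM]. exists M. exact HM. Qed.

Lemma cv_const c : Un_cv (fun _ => c) c.
Proof. intros e He. exists 0%nat. intros. unfold R_dist. rewrite Rminus_diag, Rabs_R0. lra. Qed.

Lemma cv_affine u l a : Un_cv u l -> Un_cv (fun n => (a - u n) / 2) ((a - l) / 2).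
Proof. intros H e He. destruct (H e He) as [N HN]. exists N. intros n Hn.
  specialize (HN n Hn). unfold R_dist in *. rabs. Qed.

Lemma cv_ext u v l : (forall n, u n = v n) -> Un_cv u l -> Un_cv v l.
Proof. intros E H e He. destruct (H e He) as [N HN]. exists N. intros n Hn. rewrite <- E. auto. Qed.

Lemma min_limit u v c a b cl dl : Un_cv u a -> Un_cv v b -> Un_cv c cl ->
  (forall n, Rmin (u n) (v n) - dl <= c n) -> Rmin a b - dl <= cl.
Proof. intros Hu Hv Hc H. destruct (Rle_dec (Rmin a b - dl) cl) as [|Hn]; auto. exfalso.
  set (e := (Rmin a b - dl - cl) / 2).
  assert (He : 0 < e) by (unfold e; lra).
  destruct (cv_close _ _ _ Hu He) as [N1 H1].
  destruct (cv_close _ _ _ Hv He) as [N2 H2].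
  destruct (cv_close _ _ _ Hc He) as [N3 H3].
  set (n := (N1 + N2 + N3)%nat).
  specialize (H1 n ltac:(unfold n; lia)). specialize (H2 n ltac:(unfold n; lia)).
  specialize (H3 n ltac:(unfold n; lia)). specialize (H n).
  unfold e in *. rabs; rmin. Qed.

Lemma bw_subseq (u : nat -> R) (B : R) : (forall n, Rabs (u n) <= B) ->
  exists f, strict f /\ exists l, Un_cv (fun n => u (f n)) l.
Proof. intros HB.
  destruct (Bolzano_Weierstrass u (fun c => -B <= c <= B) (compact_P3 (-B) B)) as [l Hl].
  { intros n; specialize (HB n); rabs. }
  assert (Hstep : forall (n N : nat), exists p, (N <= p)%nat /\ Rabs (u p - l) < / INR (S n)).
  { intros n N. assert (Hp : 0 < / INR (S n)) by (apply Rinv_0_lt_compat, lt_0_INR; lia).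
    destruct (Hl (disc l (mkposreal _ Hp)) N) as [p [Hp1 Hp2]].
    - exists (mkposreal _ Hp). intros y Hy; exact Hy.
    - exists p. split; auto. }
  set (ch := fun n N => proj1_sig (constructive_indefinite_description _ (Hstep n N))).
  assert (Hch : forall n N, (N <= ch n N)%nat /\ Rabs (u (ch n N) - l) < / INR (S n)).
  { intros n N. unfold ch. destruct (constructive_indefinite_description _ _); auto. }
  set (f := fix f n := match n with O => ch O O | S m => ch (S m) (S (f m)) end).
  exists f. split.
  - intros n. simpl. destruct (Hch (S n) (S (f n))). lia.
  - exists l. intros e He. destruct (archimed_cor1 e He) as [N [HN1 HN2]].
    exists N. intros n Hn. unfold R_dist.
    assert (Rabs (u (f n) - l) < / INR (S n)).
    { destruct n; simpl; [apply Hch|apply Hch]. }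
    assert (/ INR (S n) <= / INR N).
    { apply Rinv_le_contravar; [apply lt_0_INR; lia| apply le_INR; lia]. }
    lra. Qed.

Section Metric.
Variable X : Type.
Variable d : X -> X -> R.
Variable o : X.
Hypothesis Hm : is_metric d.

Lemma d_nonneg x y : 0 <= d x y. Proof. apply Hm. Qed.
Lemma d_sym x y : d x y = d y x. Proof. apply Hm. Qed.
Lemma d_tri x y z : d x z <= d x y + d y z. Proof. apply Hm. Qed.
Lemma d_refl x : d x x = 0. Proof. apply Hm. reflexivity. Qed.

Notation gp := (gromov_product d o).

Lemma gp_sym x y : gp x y = gp y x.
Proof. unfold gromov_product. rewrite (d_sym x y). lra. Qed.
Lemma gp_le x y : gp x y <= d x o.
Proof. unfold gromov_product. pose proof (d_tri y x o). rewrite (d_sym y x) in H. lra. Qed.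
Lemma gp_self x : gp x x = d x o.
Proof. unfold gromov_product. rewrite d_refl. lra. Qed.
Lemma gp_lip x x' z : Rabs (gp x z - gp x' z) <= d x x'.
Proof. unfold gromov_product. pose proof (d_tri x x' o). pose proof (d_tri x' x o).
  pose proof (d_tri x x' z). pose proof (d_tri x' x z). rewrite (d_sym x' x) in *. rabs. Qed.
Lemma busemann_gp y x : busemann d o y x = d x o - 2 * gp x y.
Proof. unfold busemann, gromov_product. rewrite (d_sym o y). lra. Qed.
Lemma busemann_lip y x x' : Rabs (busemann d o y x - busemann d o y x') <= d x x'.
Proof. unfold busemann. pose proof (d_tri x x' y). pose proof (d_tri x' x y). rewrite (d_sym x' x) in *. rabs. Qed.
Lemma busemann_o y : busemann d o y o = 0.
Proof. unfold busemann. lra. Qed.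

Definition L (h : X -> R) x := (d x o - h x) / 2.

Definition limb (y : nat -> X) (h : X -> R) := forall x, Un_cv (fun n => busemann d o (y n) x) (h x).

Lemma L_cv y h x : limb y h -> Un_cv (fun n => gp x (y n)) (L h x).
Proof. intros H. eapply cv_ext; [|apply (cv_affine _ _ (d x o) (H x))].
  intros n. simpl. rewrite busemann_gp. lra. Qed.

Lemma limb_lip y h x x' : limb y h -> Rabs (h x - h x') <= d x x'.
Proof. intros H.
  assert (A : Un_cv (fun n => busemann d o (y n) x - busemann d o (y n) x') (h x - h x')).
  { apply CV_minus; apply H. }
  pose proof (cv_cvabs _ _ A) as B.
  apply (cv_le _ _ _ 0 B). intros; apply busemann_lip. Qed.

Lemma limb_o y h : limb y h -> h o = 0.
Proof. intros H. apply (UL_sequence (fun n => busemann d o (y n) o)); auto.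
  eapply cv_ext; [|apply cv_const]. intros; simpl; rewrite busemann_o; auto. Qed.

Lemma L_le y h x : limb y h -> L h x <= d x o.
Proof. intros H. apply (cv_le _ _ _ 0 (L_cv y h x H)). intros; apply gp_le. Qed.

Lemma L_lip y h x x' : limb y h -> Rabs (L h x - L h x') <= d x x'.
Proof. intros H. pose proof (limb_lip y h x x' H). unfold L.
  pose proof (d_tri x x' o). pose proof (d_tri x' x o). rewrite (d_sym x' x) in *. rabs. Qed.

Variable dl : R.
Hypothesis Hdl : 0 <= dl.
Hypothesis Hhyp : forall w x y z, Rmin (gromov_product d w x z) (gromov_product d w y z) - dl <= gromov_product d w x y.

Lemma hyp3 x y z : Rmin (gp x z) (gp y z) - dl <= gp x y.
Proof. apply Hhyp. Qed.

Lemma K1 y h x z : limb y h -> Rmin (L h x) (L h z) - dl <= gp x z.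
Proof. intros H. apply (min_limit (fun n => gp x (y n)) (fun n => gp z (y n)) (fun _ => gp x z));
  auto using L_cv, cv_const; intros n; apply hyp3. Qed.

Lemma K2 y h x z : limb y h -> Rmin (gp z x) (L h x) - dl <= L h z.
Proof. intros H. apply (min_limit (fun _ => gp z x) (fun n => gp x (y n)) (fun n => gp z (y n)));
  auto using L_cv, cv_const; intros n; rewrite (gp_sym x); apply hyp3. Qed.

End Metric.

Lemma list_N {A : Type} (P : A -> nat -> Prop) :
  (forall a N N', (N <= N')%nat -> P a N -> P a N') ->
  forall l, (forall a, In a l -> exists N, P a N) -> exists N, forall a, In a l -> P a N.
Proof. intros Hmon l. induction l as [|a l IH]; intros H.
  - exists 0%nat. intros a [].
  - destruct (H a (or_introl eq_refl)) as [N1 H1].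
    destruct IH as [N2 H2]. { intros b Hb; apply H; right; auto. }
    exists (max N1 N2). intros b [<-|Hb].
    + eapply Hmon; [|exact H1]; lia.
    + eapply Hmon; [|apply H2; auto]; lia. Qed.

Lemma prefix_bound (u : nat -> R) N : exists C, forall k, (k < N)%nat -> u k <= C.
Proof. induction N as [|N [C HC]].
  - exists 0. intros; lia.
  - exists (Rmax C (u N)). intros k Hk. destruct (Nat.eq_dec k N) as [->|].
    + apply Rmax_r.
    + eapply Rle_trans; [apply HC; lia| apply Rmax_l]. Qed.

Lemma unb_beyond (u : nat -> R) : (forall M, exists n, M < u n) ->
  forall N B, exists n, (N <= n)%nat /\ B < u n.
Proof. intros H N B. destruct (prefix_bound u N) as [C HC].
  destruct (H (Rmax B C)) as [n Hn]. exists n. split.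
  - destruct (Compare_dec.le_lt_dec N n) as [|Hl]; auto. specialize (HC n Hl). pose proof (Rmax_r B C). lra.
  - pose proof (Rmax_l B C). lra. Qed.

Section Compact.
Variable X : Type.
Variable d : X -> X -> R.
Variable o : X.
Hypothesis Hm : is_metric d.
Hypothesis Hp : proper_space d.
Hypothesis Hg : geodesic_space d.
Notation gp := (gromov_product d o).

Lemma ball_open q e : metric_open d (fun x => d q x < e).
Proof. intros x Hx. exists (e - d q x). split; [lra|]. intros y Hy.
  pose proof (d_tri X d Hm q x y). lra. Qed.

Lemma net r e : 0 < e -> exists l : list X, forall x, d o x <= r -> exists q, In q l /\ d q x < e.
Proof. intros He. destruct (Hp o r X (fun q x => d q x < e)) as [l Hl].
  - intros q; apply ball_open.
  - intros x _. exists x. rewrite d_refl; auto.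
  - exists l. exact Hl. Qed.

Lemma K4 y h : (forall M, exists n, M < d o (y n)) -> limb X d o y h ->
  forall t, 0 <= t -> exists p, d p o <= t /\ t - 1 <= L X d o h p.
Proof. intros Hu Hl t Ht. apply NNPP. intros Hno.
  assert (Hall : forall p, d o p <= t -> L X d o h p < t - 1).
  { intros p Hp'. apply Rnot_le_lt. intros Hc. apply Hno. exists p. rewrite d_sym; auto. }
  set (U := fun (i : X * nat) (q : X) =>
    (forall m, (snd i <= m)%nat -> gp (fst i) (y m) < t - /2) /\ d (fst i) q < /4).
  destruct (Hp o t (X * nat)%type U) as [l Hlist].
  - intros i q [H1 H2]. destruct (ball_open (fst i) (/4) q H2) as [e [He1 He2]].
    exists e. split; auto. intros z Hz. split; auto.
  - intros q Hq. specialize (Hall q Hq).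
    destruct (cv_lt_ev _ _ (t - /2) (L_cv X d o Hm y h q Hl)) as [M HM]; [lra|].
    exists (q, M). split; auto. simpl. rewrite d_refl; auto. lra.
  - set (Mx := fold_right max 0%nat (map snd l)).
    assert (HMx : forall i, In i l -> (snd i <= Mx)%nat).
    { unfold Mx. clear. induction l as [|a l IH]; intros i Hi; [destruct Hi|].
      destruct Hi as [<-|Hi]; simpl; [lia|]. specialize (IH i Hi). lia. }
    destruct (unb_beyond _ Hu Mx t) as [n [Hn1 Hn2]].
    destruct (Hg o (y n)) as [g [Hg0 [HgD Hgi]]].
    set (D := d o (y n)) in *.
    set (p' := g t).
    assert (Hop : d o p' = t).
    { unfold p'. rewrite <- Hg0 at 1. rewrite Hgi; try lra. rewrite Rabs_left1; lra. }
    assert (Hpy : d p' (y n) = D - t).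
    { unfold p'. rewrite <- HgD at 1. rewrite Hgi; try lra. rewrite Rabs_left1; lra. }
    assert (Hgp : gp p' (y n) = t).
    { unfold gromov_product. rewrite Hpy, (d_sym X d Hm p' o), Hop, (d_sym X d Hm (y n) o). fold D. lra. }
    destruct (Hlist p' (Req_le _ _ Hop)) as [[p M] [Hin [HU1 HU2]]]. simpl in *.
    specialize (HMx _ Hin). simpl in HMx.
    specialize (HU1 n ltac:(lia)).
    pose proof (gp_lip X d o Hm p p' (y n)). rabs. Qed.

End Compact.

Lemma sig_eq {A : Type} {P : A -> Prop} (a b : sig P) : proj1_sig a = proj1_sig b -> a = b.
Proof. destruct a as [a pa], b as [b pb]; simpl; intros ->. f_equal. apply proof_irrelevance. Qed.

Definition tends (u : nat -> R) := forall M, exists N, forall n, (N <= n)%nat -> M <= u n.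

Lemma nat_big (r : R) : exists K, forall n, (K <= n)%nat -> r <= INR n.
Proof. destruct (INR_unbounded r) as [K HK]. exists K. intros n Hn.
  apply le_INR in Hn. lra. Qed.

Section Phi.
Variable X : Type.
Variable d : X -> X -> R.
Variable o : X.
Hypothesis Hm : is_metric d.
Hypothesis Hp : proper_space d.
Hypothesis Hg : geodesic_space d.
Variable dl : R.
Hypothesis Hdl : 0 <= dl.
Hypothesis Hhyp : forall w x y z, Rmin (gromov_product d w x z) (gromov_product d w y z) - dl <= gromov_product d w x y.
Notation gp := (gromov_product d o).
Notation L := (L X d o).

Definition Phi_set (h : X -> R) : (nat -> X) -> Prop :=
  fun z => conv_at_infty d o z /\ tends (fun j => L h (z j)).
Definition gclass (x : nat -> X) : (nat -> X) -> Prop :=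
  fun y => conv_at_infty d o y /\ seq_equiv d o x y.

Lemma tend_conv h x : is_horofunction d o h -> tends (fun j => L h (x j)) -> conv_at_infty d o x.
Proof. intros [y [_ Hy]] Ht M. destruct (Ht (M + dl)) as [N HN]. exists N. intros i j Hi Hj.
  pose proof (K1 X d o Hm dl Hhyp y h (x i) (x j) Hy). pose proof (HN i Hi). pose proof (HN j Hj) as HNj.
  rmin. Qed.

Lemma phi_class h x : is_horofunction d o h -> tends (fun j => L h (x j)) -> Phi_set h = gclass x.
Proof. intros Hh Ht. pose proof Hh as [y [_ Hy]]. apply functional_extensionality. intros z.
  apply propositional_extensionality. unfold Phi_set, gclass. split; intros [Hc H]; split; auto.
  - intros M. destruct (Ht (M + dl)) as [N1 H1]. destruct (H (M + dl)) as [N2 H2].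
    exists (max N1 N2). intros i j Hi Hj.
    pose proof (K1 X d o Hm dl Hhyp y h (x i) (z j) Hy). specialize (H1 i ltac:(lia)).
    specialize (H2 j ltac:(lia)). rmin.
  - intros M. destruct (Ht (M + dl)) as [N1 H1]. destruct (H (M + dl)) as [N2 H2].
    exists N2. intros j Hj. set (i := max N1 N2).
    pose proof (K2 X d o Hm dl Hhyp y h (x i) (z j) Hy). specialize (H1 i ltac:(unfold i; lia)).
    specialize (H2 i j ltac:(unfold i; lia) Hj). rewrite gp_sym in H2 by auto. rmin. Qed.

Lemma tend_exists h : is_horofunction d o h ->
  exists x : nat -> X, forall n, d (x n) o <= INR n /\ INR n - 1 <= L h (x n).
Proof. intros [y [Hu Hy]].
  assert (H : forall n : nat, exists p, d p o <= INR n /\ INR n - 1 <= L h p).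
  { intros n. apply (K4 X d o Hm Hp Hg y h Hu Hy). apply pos_INR. }
  exists (fun n => proj1_sig (constructive_indefinite_description _ (H n))).
  intros n. destruct (constructive_indefinite_description _ _); auto. Qed.

Lemma tend_exists2 h : is_horofunction d o h -> exists x : nat -> X,
  (forall n, d (x n) o <= INR n /\ INR n - 1 <= L h (x n)) /\ tends (fun j => L h (x j)).
Proof. intros Hh. destruct (tend_exists h Hh) as [x Hx]. exists x. split; auto.
  intros M. destruct (nat_big (M + 1)) as [K HK]. exists K. intros n Hn.
  specialize (HK n Hn). specialize (Hx n). lra. Qed.

Lemma Phi_ok (b : horo_boundary d o) : exists x, conv_at_infty d o x /\
  Phi_set (proj1_sig b) = fun y => conv_at_infty d o y /\ seq_equiv d o x y.
Proof. destruct b as [h Hh]. simpl. destruct (tend_exists2 h Hh) as [x [_ Hx]].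
  exists x. split; [eapply tend_conv; eauto|]. apply phi_class; auto. Qed.

Definition Phi (b : horo_boundary d o) : gromov_boundary d o :=
  exist _ (Phi_set (proj1_sig b)) (Phi_ok b).

Lemma S1half h h' x y : is_horofunction d o h -> is_horofunction d o h' ->
  tends (fun j => L h (x j)) -> tends (fun j => L h' (x j)) -> L h' y - 2 * dl <= L h y.
Proof. intros [y1 [_ Hy1]] [y2 [_ Hy2]] T1 T2.
  destruct (T1 (L h' y)) as [N1 H1]. destruct (T2 (L h' y)) as [N2 H2].
  set (i := max N1 N2). specialize (H1 i ltac:(unfold i; lia)). specialize (H2 i ltac:(unfold i; lia)).
  pose proof (K2 X d o Hm dl Hhyp y1 h (x i) y Hy1).
  pose proof (K1 X d o Hm dl Hhyp y2 h' y (x i) Hy2). rmin. Qed.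

Lemma S1 h h' x : is_horofunction d o h -> is_horofunction d o h' ->
  tends (fun j => L h (x j)) -> tends (fun j => L h' (x j)) -> sublin_equiv d o h h'.
Proof. intros H1 H2 T1 T2 eps He. exists (4 * dl / eps). intros y Hy.
  pose proof (S1half h h' x y H1 H2 T1 T2). pose proof (S1half h' h x y H2 H1 T2 T1).
  assert (4 * dl <= eps * d o y).
  { apply (Rmult_le_compat_l eps) in Hy; [|lra]. unfold Rdiv in Hy.
    rewrite <- Rmult_assoc, (Rmult_comm eps), Rmult_assoc, Rinv_r, Rmult_1_r in Hy; lra. }
  unfold L in *. rabs. Qed.

Lemma S2 h h' x : is_horofunction d o h -> sublin_equiv d o h h' ->
  (forall n, d (x n) o <= INR n /\ INR n - 1 <= L h (x n)) -> tends (fun j => L h' (x j)).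
Proof. intros Hh Hs Hx M. destruct (Hs 1 ltac:(lra)) as [N HN].
  destruct (nat_big (Rmax (N + 1) (2 * M + 2))) as [K HK]. exists K. intros n Hn.
  specialize (HK n Hn). specialize (Hx n). pose proof (Rmax_l (N+1) (2*M+2)). pose proof (Rmax_r (N+1) (2*M+2)).
  specialize (HN (x n)). rewrite (d_sym X d Hm o) in HN.
  assert (L h (x n) <= d (x n) o) by (destruct Hh as [y [_ Hy]]; eapply L_le; eauto).
  specialize (HN ltac:(lra)). unfold L in *. rabs. Qed.

End Phi.

Section Quot.
Variable X : Type.
Variable d : X -> X -> R.
Variable o : X.
Hypothesis Hm : is_metric d.
Hypothesis Hp : proper_space d.
Hypothesis Hg : geodesic_space d.
Variable dl : R.
Hypothesis Hdl : 0 <= dl.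
Hypothesis Hhyp : forall w x y z, Rmin (gromov_product d w x z) (gromov_product d w y z) - dl <= gromov_product d w x y.
Notation gp := (gromov_product d o).
Notation L := (L X d o).
Notation Phi := (Phi X d o Hm Hp Hg dl Hhyp).
Notation Phi_set := (Phi_set X d o).

Lemma Phi_eq_iff (b b' : horo_boundary d o) :
  Phi b = Phi b' <-> sublin_equiv d o (proj1_sig b) (proj1_sig b').
Proof. destruct b as [h Hh], b' as [h' Hh']. simpl. split.
  - intros E. apply (f_equal (@proj1_sig _ _)) in E. simpl in E.
    destruct (tend_exists2 X d o Hm Hp Hg h Hh) as [x [_ Hx]].
    assert (Hin : Phi_set h x). { split; [eapply (tend_conv X d o Hm dl Hhyp h x Hh Hx)|exact Hx]. }
    rewrite E in Hin. destruct Hin as [_ Hx'].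
    eapply (S1 X d o Hm dl Hdl Hhyp); eauto.
  - intros Hs. apply sig_eq. simpl.
    destruct (tend_exists2 X d o Hm Hp Hg h Hh) as [x [Hx1 Hx]].
    pose proof (S2 X d o Hm h h' x Hh Hs Hx1) as Hx'.
    rewrite (phi_class X d o Hm dl Hhyp h x Hh Hx), (phi_class X d o Hm dl Hhyp h' x Hh' Hx'). auto. Qed.

Lemma sublin_refl (b : horo_boundary d o) : sublin_equiv d o (proj1_sig b) (proj1_sig b).
Proof. apply Phi_eq_iff. auto. Qed.

Lemma sq_proj_eq (a b : horo_boundary d o) : Phi a = Phi b -> sq_proj d o a = sq_proj d o b.
Proof. intros E. apply sig_eq. simpl. apply functional_extensionality. intros eta.
  apply propositional_extensionality. rewrite <- !Phi_eq_iff. rewrite E. tauto. Qed.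

Definition fq (C : sublin_quotient d o) : gromov_boundary d o :=
  Phi (proj1_sig (constructive_indefinite_description _ (proj2_sig C))).

Lemma fq_proj b : fq (sq_proj d o b) = Phi b.
Proof. unfold fq. destruct (constructive_indefinite_description _ _) as [xi E]. simpl in *.
  assert (H : sublin_equiv d o (proj1_sig b) (proj1_sig b)) by apply sublin_refl.
  pose proof (f_equal (fun P => P b) E) as E'. simpl in E'.
  rewrite E' in H. apply Phi_eq_iff in H. auto. Qed.

Lemma sq_surj (C : sublin_quotient d o) : exists b, C = sq_proj d o b.
Proof. destruct C as [P [xi E]]. exists xi. apply sig_eq. simpl. auto. Qed.

Lemma singleton_compact p : compact_in d (fun x => x = p).
Proof. intros I U HU Hc. destruct (Hc p eq_refl) as [i Hi]. exists (i :: nil).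
  intros x ->. exists i. split; [left; auto|auto]. Qed.

Lemma interval_open c e : R_open (fun s => Rabs (s - c) < e).
Proof. intros s Hs. exists (e - Rabs (s - c)). split; [lra|]. intros s' Hs'. rabs. Qed.

Lemma fq_cont V : gb_open d o V -> sq_open d o (fun C => V (fq C)).
Proof. intros HV. unfold sq_open, horo_open.
  exists (fun g => exists l : list ((X -> R) -> Prop), (forall S, In S l -> co_subbasic d S) /\
    (forall S, In S l -> S g) /\ forall h (pf : is_horofunction d o h), (forall S, In S l -> S h) ->
    V (Phi (exist _ h pf))).
  split.
  - intros g [l [H1 [H2 H3]]]. exists l. split; auto. split; auto. intros g' Hg'. exists l. auto.
  - intros b. rewrite fq_proj. split.
    + intros Hb. destruct b as [h Hh]. simpl.
      destruct (HV _ Hb) as [r Hr].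
      set (t := Rabs r + 2 + 2 * dl).
      pose proof Hh as [y [Hu Hy]].
      destruct (K4 X d o Hm Hp Hg y h Hu Hy t) as [p [Hp1 Hp2]]. { unfold t; pose proof (Rabs_pos r); lra. }
      exists ((fun g => forall x, x = p -> Rabs (g x - h p) < 1) :: nil). split; [|split].
      * intros S [<-|[]]. exists (fun x => x = p), (fun s => Rabs (s - h p) < 1).
        split; [apply singleton_compact|]. split; [apply interval_open|]. tauto.
      * intros S [<-|[]]. intros x ->. rewrite Rminus_diag, Rabs_R0. lra.
      * intros h' pf HS. apply Hr.
        specialize (HS _ (or_introl eq_refl) p eq_refl).
        destruct (tend_exists2 X d o Hm Hp Hg h Hh) as [x [_ Hx]].
        destruct (tend_exists2 X d o Hm Hp Hg h' pf) as [z [_ Hz]].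
        pose proof pf as [y' [_ Hy']].
        exists x, z. split; [split; [exact (tend_conv X d o Hm dl Hhyp h x Hh Hx)|exact Hx]|].
        split; [split; [exact (tend_conv X d o Hm dl Hhyp h' z pf Hz)|exact Hz]|].
        exists (r + /2). split; [lra|].
        destruct (Hx t) as [N1 HN1]. destruct (Hz t) as [N2 HN2]. exists (max N1 N2).
        intros i j Hi Hj. specialize (HN1 i ltac:(lia)). specialize (HN2 j ltac:(lia)).
        pose proof (hyp3 X d o dl Hhyp (x i) (z j) p).
        pose proof (K1 X d o Hm dl Hhyp y h (x i) p Hy).
        pose proof (K1 X d o Hm dl Hhyp y' h' (z j) p Hy').
        assert (L h' p >= L h p - /2) by (unfold L, Submission.L in *; rabs).
        pose proof (Rle_abs r). unfold t in *. rmin.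
    + intros [l [H1 [H2 H3]]]. destruct b as [h Hh]. apply H3. apply H2. Qed.

End Quot.

Section Extract.
Variable X : Type.
Variable d : X -> X -> R.
Variable o : X.
Hypothesis Hm : is_metric d.
Hypothesis Hp : proper_space d.
Variable F : nat -> X -> R.
Hypothesis HF : forall n x x', Rabs (F n x - F n x') <= d x x'.
Hypothesis HF0 : forall n, F n o = 0.

Lemma F_bound n x : Rabs (F n x) <= d x o.
Proof. pose proof (HF n x o). rewrite HF0 in H. rewrite Rminus_0_r in H. auto. Qed.

Lemma strict_id : strict (fun n => n).
Proof. intros n; lia. Qed.

Lemma ex_list (l : list X) (phi : nat -> nat) : exists rho, strict rho /\
  forall q, In q l -> exists Lq, Un_cv (fun n => F (phi (rho n)) q) Lq.
Proof. induction l as [|q l [r1 [Hr1 IH]]].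
  - exists (fun n => n). split; [apply strict_id|]. intros q [].
  - destruct (bw_subseq (fun n => F (phi (r1 n)) q) (d q o)) as [r2 [Hr2 [Lq HLq]]].
    { intros; apply F_bound. }
    exists (fun n => r1 (r2 n)). split; [apply strict_comp; auto|].
    intros q' [<-|Hq'].
    + exists Lq. exact HLq.
    + destruct (IH q' Hq') as [Lq' HLq']. exists Lq'.
      exact (cv_subseq (fun n => F (phi (r1 n)) q') Lq' r2 HLq' Hr2). Qed.

Lemma netk (k : nat) : exists l : list X, forall x, d o x <= INR k -> exists q, In q l /\ d q x < / INR (S k).
Proof. apply (net X d o Hm Hp). apply Rinv_0_lt_compat, lt_0_INR; lia. Qed.

Definition nets k := proj1_sig (constructive_indefinite_description _ (netk k)).
Lemma nets_spec k x : d o x <= INR k -> exists q, In q (nets k) /\ d q x < / INR (S k).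
Proof. unfold nets. destruct (constructive_indefinite_description _ _); auto. Qed.

Definition rho j phi := proj1_sig (constructive_indefinite_description _ (ex_list (nets j) phi)).
Lemma rho_spec j phi : strict (rho j phi) /\
  forall q, In q (nets j) -> exists Lq, Un_cv (fun n => F (phi (rho j phi n)) q) Lq.
Proof. unfold rho. destruct (constructive_indefinite_description _ _); auto. Qed.

Fixpoint phis (j : nat) : nat -> nat :=
  match j with O => fun n => n | S j => fun n => phis j (rho j (phis j) n) end.

Lemma phis_strict j : strict (phis j).
Proof. induction j; simpl. apply strict_id. apply strict_comp; auto. apply rho_spec. Qed.

Lemma phis_R j k : exists R, strict R /\ forall m, phis (k + j) m = phis j (R m).
Proof. induction k as [|k [R [HR E]]].
  - exists (fun n => n). split; [apply strict_id|auto].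
  - exists (fun m => R (rho (k + j) (phis (k + j)) m)). split.
    + apply strict_comp; auto. apply rho_spec.
    + intros m. simpl. apply E. Qed.

Definition theta n := phis n n.

Lemma theta_strict : strict theta.
Proof. intros n. unfold theta. simpl.
  destruct (rho_spec n (phis n)) as [Hr _].
  pose proof (strict_ge _ Hr (S n)).
  pose proof (phis_strict n n).
  pose proof (strict_mono _ (phis_strict n) (S n) (rho n (phis n) (S n)) H). lia. Qed.

Lemma theta_cv_net j q : In q (nets j) -> exists Lq, Un_cv (fun n => F (theta n) q) Lq.
Proof. intros Hq. destruct (rho_spec j (phis j)) as [_ Hs]. destruct (Hs q Hq) as [Lq HL].
  exists Lq. intros e He. destruct (HL e He) as [N HN]. exists (max N (S j)). intros n Hn.
  destruct (phis_R (S j) (n - S j)) as [R [HR E]].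
  unfold theta. replace n with (n - S j + S j)%nat at 1 by lia. rewrite E.
  apply HN. pose proof (strict_ge _ HR n). lia. Qed.

Lemma theta_cv x : exists l, Un_cv (fun n => F (theta n) x) l.
Proof. assert (C : Cauchy_crit (fun n => F (theta n) x)).
  { intros e He. destruct (nat_big (d o x)) as [K1 HK1].
    destruct (archimed_cor1 (e / 3)) as [K2 [HK2 HK2']]; [lra|].
    set (k := max K1 K2).
    destruct (nets_spec k x (HK1 k ltac:(unfold k; lia))) as [q [Hq Hqx]].
    assert (/ INR (S k) <= / INR K2).
    { apply Rinv_le_contravar; [apply lt_0_INR; lia| apply le_INR; unfold k; lia]. }
    destruct (theta_cv_net k q Hq) as [Lq HLq].
    destruct (HLq (e / 6)) as [N HN]; [lra|]. exists N. intros n m Hn Hmm.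
    pose proof (HN n Hn). pose proof (HN m Hmm). unfold R_dist, Rdist in *.
    pose proof (HF (theta n) x q). pose proof (HF (theta m) x q).
    rewrite (d_sym X d Hm x q) in *. rabs. }
  destruct (R_complete _ C) as [l Hl]. exists l; auto. Qed.

Lemma extract : exists th, strict th /\ forall x, exists l, Un_cv (fun k => F (th k) x) l.
Proof. exists theta. split. apply theta_strict. apply theta_cv. Qed.

End Extract.

Section Final.
Variable X : Type.
Variable d : X -> X -> R.
Variable o : X.
Hypothesis Hm : is_metric d.
Hypothesis Hp : proper_space d.
Hypothesis Hg : geodesic_space d.
Variable dl : R.
Hypothesis Hdl : 0 <= dl.
Hypothesis Hhyp : forall w x y z, Rmin (gromov_product d w x z) (gromov_product d w y z) - dl <= gromov_product d w x y.
Notation gp := (gromov_product d o).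
Notation L := (L X d o).
Notation Phi := (Phi X d o Hm Hp Hg dl Hhyp).
Notation Phi_set := (Phi_set X d o).

Lemma horo_lip h : is_horofunction d o h -> forall x x', Rabs (h x - h x') <= d x x'.
Proof. intros [y [_ Hy]] x x'. eapply limb_lip; eauto. Qed.
Lemma horo_o h : is_horofunction d o h -> h o = 0.
Proof. intros [y [_ Hy]]. eapply limb_o; eauto. Qed.

Lemma fun_choice {A B : Type} (P : A -> B -> Prop) : (forall a, exists b, P a b) -> exists f : A -> B, forall a, P a (f a).
Proof. intros H. exists (fun a => proj1_sig (constructive_indefinite_description _ (H a))).
  intros a. destruct (constructive_indefinite_description _ _); auto. Qed.

Lemma Phi_surj (eta : gromov_boundary d o) : exists b, Phi b = eta.
Proof. destruct eta as [C [x [Hx E]]].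
  destruct (extract X d o Hm Hp (fun n => busemann d o (x n))) as [th [Hth Hc]].
  { intros; apply busemann_lip; auto. } { intros; apply busemann_o. }
  destruct (fun_choice _ Hc) as [h Hh].
  assert (Hhor : is_horofunction d o h).
  { exists (fun n => x (th n)). split; [|exact Hh].
    intros M. destruct (Hx (M + 1)) as [N HN]. exists N. specialize (HN (th N) (th N)).
    pose proof (strict_ge _ Hth N). rewrite gp_self in HN by auto. rewrite (d_sym X d Hm o). 
    specialize (HN ltac:(lia) ltac:(lia)). lra. }
  exists (exist _ h Hhor). apply sig_eq. simpl. rewrite E.
  apply (phi_class X d o Hm dl Hhyp h x Hhor).
  intros M. destruct (Hx M) as [N HN]. exists N. intros i Hi.
  apply (cv_ge _ _ _ N (L_cv X d o Hm (fun n => x (th n)) h (x i) Hh)).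
  intros n Hn. apply HN; auto. pose proof (strict_ge _ Hth n); lia. Qed.

Lemma limit_horo (H : nat -> X -> R) (h : X -> R) : (forall k, is_horofunction d o (H k)) ->
  (forall x, Un_cv (fun k => H k x) (h x)) -> is_horofunction d o h.
Proof. intros HH Hc.
  assert (Hz : forall k : nat, exists z, INR k < d o z /\ forall x, d o x <= INR k ->
     Rabs (busemann d o z x - H k x) <= 3 * / INR (S k)).
  { intros k. destruct (HH k) as [y [Hu Hy]].
    set (e := / INR (S k)). assert (He : 0 < e) by (apply Rinv_0_lt_compat, lt_0_INR; lia).
    destruct (net X d o Hm Hp (INR k) e He) as [l Hl].
    destruct (list_N (fun q N => forall n, (N <= n)%nat -> Rabs (busemann d o (y n) q - H k q) < e)) with (l := l)
      as [N HN].
    { intros q N N' HNN' HP n Hn. apply HP; lia. }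
    { intros q _. apply (cv_close _ _ _ (Hy q) He). }
    destruct (unb_beyond _ Hu N (INR k)) as [n [Hn1 Hn2]].
    exists (y n). split; auto. intros x Hxk. destruct (Hl x Hxk) as [q [Hq Hqx]].
    specialize (HN q Hq n Hn1).
    pose proof (busemann_lip X d o Hm (y n) x q). pose proof (limb_lip X d o Hm y (H k) q x Hy).
    rewrite (d_sym X d Hm x q) in *. fold e. rabs. }
  destruct (fun_choice _ Hz) as [z Hzs].
  exists z. split.
  - intros M. destruct (nat_big M) as [K HK]. exists K. specialize (HK K (le_n _)). destruct (Hzs K). lra.
  - intros x e He. destruct (nat_big (d o x)) as [K1 HK1].
    destruct (archimed_cor1 (e / 6)) as [K2 [HK2 HK2']]; [lra|].
    destruct (Hc x (e / 2)) as [K3 HK3]; [lra|].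
    exists (max K1 (max K2 K3)). intros k Hk.
    destruct (Hzs k) as [_ Hb]. specialize (Hb x (HK1 k ltac:(lia))).
    specialize (HK3 k ltac:(lia)).
    assert (/ INR (S k) <= / INR K2).
    { apply Rinv_le_contravar; [apply lt_0_INR; lia| apply le_INR; lia]. }
    unfold R_dist, Rdist in *. rabs. Qed.

Lemma nbhd_one (H : nat -> X -> R) (h : X -> R) (S : (X -> R) -> Prop) :
  (forall k x x', Rabs (H k x - H k x') <= d x x') ->
  (forall x, Un_cv (fun k => H k x) (h x)) -> co_subbasic d S -> S h ->
  exists N, forall k, (N <= k)%nat -> S (H k).
Proof. intros HL Hc [K [U [HK [HU HS]]]] Sh. pose proof (proj1 (HS h) Sh) as Sh0; clear Sh; rename Sh0 into Sh.
  set (V := fun (i : X * R) y => K (fst i) /\ 0 < snd i /\ (forall s, Rabs (s - h (fst i)) < snd i -> U s)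
     /\ d (fst i) y < snd i / 3).
  destruct (HK (X * R)%type V) as [li Hli].
  - intros i y [A [B [C D']]]. destruct (ball_open X d Hm (fst i) (snd i / 3) y D') as [e [He1 He2]].
    exists e. split; auto. intros z Hz. unfold V. auto.
  - intros y Ky. destruct (HU (h y) (Sh y Ky)) as [e [He1 He2]]. exists (y, e).
    unfold V; simpl. rewrite d_refl by auto. repeat split; auto. lra.
  - destruct (list_N (fun (i : X * R) N => 0 < snd i -> forall k, (N <= k)%nat -> Rabs (H k (fst i) - h (fst i)) < snd i / 3)) with (l := li) as [N HN].
    { intros i N N' HNN' HP Hp' k Hk. apply HP; auto; lia. }
    { intros i _. destruct (Rlt_dec 0 (snd i)) as [Hpos|Hneg].
      - destruct (cv_close _ _ (snd i / 3) (Hc (fst i))) as [N HN]; [lra|]. exists N. auto.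
      - exists 0%nat. intros; contradiction. }
    exists N. intros k Hk. apply (proj2 (HS (H k))). intros y Ky. destruct (Hli y Ky) as [[x e] [Hin [A [B [C D']]]]].
    simpl in *. apply C. specialize (HN _ Hin B k Hk). simpl in HN. pose proof (HL k y x).
    rewrite (d_sym X d Hm y x) in *. rabs. Qed.

Lemma nbhd_list (H : nat -> X -> R) (h : X -> R) (l : list ((X -> R) -> Prop)) :
  (forall k x x', Rabs (H k x - H k x') <= d x x') ->
  (forall x, Un_cv (fun k => H k x) (h x)) -> (forall S, In S l -> co_subbasic d S) -> (forall S, In S l -> S h) ->
  exists N, forall k, (N <= k)%nat -> forall S, In S l -> S (H k).
Proof. intros HL Hc Hsub Hh.
  destruct (list_N (fun S N => forall k, (N <= k)%nat -> S (H k))) with (l := l) as [N HN].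
  - intros S N N' HNN' HP k Hk. apply HP; lia.
  - intros S HS. apply (nbhd_one H h S HL Hc (Hsub S HS) (Hh S HS)).
  - exists N. intros k Hk S HS. apply HN; auto. Qed.

Definition sec (eta : gromov_boundary d o) : horo_boundary d o :=
  proj1_sig (constructive_indefinite_description _ (Phi_surj eta)).
Lemma sec_spec eta : Phi (sec eta) = eta.
Proof. unfold sec. destruct (constructive_indefinite_description _ _); auto. Qed.

Definition gq (eta : gromov_boundary d o) : sublin_quotient d o := sq_proj d o (sec eta).

Lemma gq_cont U : sq_open d o U -> gb_open d o (fun eta => U (gq eta)).
Proof. intros HU xi HUxi. apply NNPP. intros Hno.
  assert (Hseq : forall n : nat, exists eta, gprod_gt d o xi eta (INR n) /\ ~ U (gq eta)).
  { intros n. apply NNPP. intros Hn. apply Hno. exists (INR n). intros eta Heta.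
    apply NNPP. intros HnU. apply Hn. exists eta. auto. }
  destruct (fun_choice _ Hseq) as [etas Hetas].
  set (F := fun n => proj1_sig (sec (etas n))).
  assert (HFh : forall n, is_horofunction d o (F n)) by (intros n; exact (proj2_sig (sec (etas n)))).
  destruct (extract X d o Hm Hp F) as [th [Hth Hc]].
  { intros; apply horo_lip; auto. } { intros; apply horo_o; auto. }
  destruct (fun_choice _ Hc) as [h Hh].
  assert (Hhor : is_horofunction d o h).
  { apply (limit_horo (fun k => F (th k)) h); auto. }
  set (hh := exist _ h Hhor : horo_boundary d o).
  set (bx := sec xi).
  assert (Ebx : Phi bx = xi) by apply sec_spec.
  destruct (tend_exists2 X d o Hm Hp Hg (proj1_sig bx) (proj2_sig bx)) as [p [Hp1 Hpt]].
  pose proof (proj2_sig bx) as [yb [_ Hyb]].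
  assert (Hkey : forall m n : nat, Rmin (INR m - 1 - dl) (INR n) - 2 * dl <= L (F n) (p m)).
  { intros m n. destruct (Hetas n) as [Hgt _].
    destruct Hgt as [x [w [Hxin [Hwin [r' [Hr' [N HN]]]]]]].
    rewrite <- Ebx in Hxin. destruct Hxin as [_ Hxt].
    pose proof (sec_spec (etas n)) as Ew. rewrite <- Ew in Hwin. destruct Hwin as [_ Hwt].
    destruct (Hxt (INR m)) as [N1 HN1]. destruct (Hwt (INR n + INR m)) as [N2 HN2].
    set (i := max N N1). set (j := max N N2).
    specialize (HN1 i ltac:(unfold i; lia)). specialize (HN2 j ltac:(unfold j; lia)).
    specialize (HN i j ltac:(unfold i; lia) ltac:(unfold j; lia)).
    destruct (HFh n) as [yn [_ Hyn]].
    pose proof (K2 X d o Hm dl Hhyp yn (F n) (w j) (p m) Hyn).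
    pose proof (hyp3 X d o dl Hhyp (p m) (w j) (x i)).
    rewrite (gp_sym X d o Hm (w j) (x i)) in H0.
    pose proof (K1 X d o Hm dl Hhyp yb (proj1_sig bx) (p m) (x i) Hyb).
    destruct (Hp1 m) as [_ Hpm]. simpl in *.
    pose proof (pos_INR m). pose proof (pos_INR n). change (L (proj1_sig (sec (etas n))) (w j)) with (L (F n) (w j)) in HN2. rmin. }
  assert (Ht : tends (fun j => L h (p j))).
  { intros M. destruct (nat_big (M + 1 + 3 * dl)) as [K HK]. exists K. intros m Hm'.
    specialize (HK m Hm').
    assert (Hcv : Un_cv (fun k => L (F (th k)) (p m)) (L h (p m))).
    { unfold Submission.L. apply cv_affine. apply Hh. }
    assert (INR m - 1 - 3 * dl <= L h (p m)).
    { apply (cv_ge _ _ _ m Hcv). intros k Hk. specialize (Hkey m (th k)).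
      pose proof (strict_ge _ Hth k). assert (INR m <= INR (th k)) by (apply le_INR; lia).
      rmin. }
    lra. }
  assert (Eh : Phi hh = Phi bx).
  { apply sig_eq. simpl.
    rewrite (phi_class X d o Hm dl Hhyp h p Hhor Ht).
    rewrite (phi_class X d o Hm dl Hhyp (proj1_sig bx) p (proj2_sig bx) Hpt). auto. }
  assert (Uh : U (sq_proj d o hh)).
  { rewrite (sq_proj_eq X d o Hm Hp Hg dl Hdl Hhyp hh bx Eh). exact HUxi. }
  destruct HU as [W [HW HWb]]. apply HWb in Uh. simpl in Uh.
  destruct (HW h Uh) as [l [Hl1 [Hl2 Hl3]]].
  destruct (nbhd_list (fun k => F (th k)) h l) as [N HN]; auto.
  { intros; apply horo_lip; auto. }
  specialize (HN N (le_n _)).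
  destruct (Hetas (th N)) as [_ HnU]. apply HnU.
  unfold gq. apply HWb. apply Hl3. exact HN. Qed.

End Final.

Theorem corollary2p7 (X : Type) (d : X -> X -> R) (o : X) :
  is_metric d -> proper_space d -> geodesic_space d -> gromov_hyperbolic d ->
  homeomorphic (sq_open d o) (gb_open d o).
Proof. intros Hm Hp Hg [dl [Hdl Hhyp]].
  exists (fq X d o Hm Hp Hg dl Hhyp), (gq X d o Hm Hp Hg dl Hhyp).
  split; [|split; [|split]].
  - intros C. destruct (sq_surj X d o C) as [b ->]. unfold gq. rewrite fq_proj by auto.
    apply (sq_proj_eq X d o Hm Hp Hg dl Hdl Hhyp). apply sec_spec.
  - intros eta. unfold gq. rewrite fq_proj by auto. apply sec_spec.
  - intros V HV. apply fq_cont; auto.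
  - intros U HU. apply gq_cont; auto.
Qed.
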